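(* Let $\mathbf C$ be the covariance matrix of a Matérn Gaussian process with parameters $(\sigma_0^2,\phi_0,\nu_0)$ evaluated at locations $s_1,\dots,s_n\in\mathbb R^2$ satisfying $\|s_i-s_j\|\ge h$ for all $i\ne j$, for a fixed $h>0$, and let $\tau_0^2\ge0$. Then the maximum eigenvalue of $\boldsymbol\Sigma=\mathbf C+\tau_0^2\mathbf I$ has an upper bound $\Psi_{high}<\infty$ that is uniform in $n$.
   Context: Matérn covariance: $\mathbf C_{ij}=C(\|s_i-s_j\|)$ with $C(d)=\frac{2^{1-\nu_0}\sigma_0^2(\sqrt2\phi_0d)^{\nu_0}}{\Gamma(\nu_0)}\mathcal K_{\nu_0}(\sqrt2\phi_0d)$ (and $C(0)=\sigma_0^2$), $\mathcal K_\nu$ the modified Bessel function of the second kind. *)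

(* Defs.v *)
From mathcomp Require Import all_boot all_order all_algebra.
From mathcomp Require Import all_classical all_reals all_analysis.
Set Implicit Arguments. Unset Strict Implicit. Unset Printing Implicit Defensive.
Import Order.TTheory GRing.Theory Num.Theory.
Import numFieldNormedType.Exports.
Local Open Scope classical_set_scope.
Local Open Scope ring_scope.

Definition coshR {R : realType} (t : R) : R := (expR t + expR (- t)) / 2.

Definition GammaR {R : realType} (nu : R) : R :=
  Rintegral (@lebesgue_measure R) `]0%R, +oo[
    (fun t : R => t `^ (nu - 1) * expR (- t)).

Definition BesselK {R : realType} (nu x : R) : R :=
  Rintegral (@lebesgue_measure R) `[0%R, +oo[
    (fun t : R => expR (- x * coshR t) * coshR (nu * t)).

Definition matern {R : realType} (sigma2 phi nu d : R) : R :=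
  if d == 0 then sigma2 else
  2 `^ (1 - nu) * sigma2 * (Num.sqrt 2 * phi * d) `^ nu / GammaR nu
    * BesselK nu (Num.sqrt 2 * phi * d).

Definition dist2 {R : realType} (s t : R * R) : R :=
  Num.sqrt ((s.1 - t.1) ^+ 2 + (s.2 - t.2) ^+ 2).

Definition matern_cov {R : realType} (sigma2 phi nu : R) (n : nat)
  (s : 'I_n -> R * R) : 'M[R]_n :=
  \matrix_(i, j) matern sigma2 phi nu (dist2 (s i) (s j)).

Definition Sigma_mat {R : realType} (sigma2 phi nu tau2 : R) (n : nat)
  (s : 'I_n -> R * R) : 'M[R]_n :=
  matern_cov sigma2 phi nu s + tau2%:M.

(* Main.v *)
Require Import Defs.
From mathcomp Require Import all_boot all_order all_algebra.
From mathcomp Require Import all_classical all_reals all_analysis.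
From mathcomp Require Import ring lra zify measurable_realfun exponential_distribution.
Import Order.TTheory GRing.Theory Num.Theory.
Import numFieldNormedType.Exports.
Local Open Scope classical_set_scope.
Local Open Scope ring_scope.

Section Ana.
Variable R : realType.

Lemma coshR_ge1 (t : R) : 1 <= coshR t.
Proof.
rewrite /coshR; have := expR_ge1Dx t; have := expR_ge1Dx (- t); lra.
Qed.

Lemma coshR_le_exp (t : R) : 0 <= t -> coshR t <= expR t.
Proof.
move=> t0; rewrite /coshR.
have : expR (- t) <= expR t by rewrite ler_expR; lra.
have := expR_ge0 t; lra.
Qed.

Lemma coshR_ge_sq (t : R) : 0 <= t -> t ^+ 2 / 8 <= coshR t.
Proof.
move=> t0; rewrite /coshR.
have e2 : expR t = expR (t / 2) * expR (t / 2).
  by rewrite -expRD; congr expR; field.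
have h1 := expR_ge1Dx (t / 2).
have := expR_ge0 (- t).
rewrite e2; nra.
Qed.

Lemma measurable_BK (nu y : R) :
  measurable_fun setT (fun t : R => expR (- y * coshR t) * coshR (nu * t)).
Proof.
have mc : measurable_fun setT (@coshR R).
  rewrite /coshR; apply: measurable_funM => //.
  apply: measurable_funD; first exact: measurable_expR.
  exact: measurableT_comp (@measurable_expR R) _.
apply: measurable_funM.
  apply: measurableT_comp; first exact: measurable_expR.
  apply: measurable_funM => //.
apply: measurableT_comp => //.
Qed.

Lemma BesselK_ge0 (nu y : R) : 0 <= BesselK nu y.
Proof.
apply: Rintegral_ge0 => t _; apply: mulr_ge0; first exact: expR_ge0.
rewrite /coshR; apply: divr_ge0 => //; apply: addr_ge0; exact: expR_ge0.
Qed.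

Lemma BesselK_le (y0 nu y : R) : 0 < y0 -> 0 < nu -> y0 <= y ->
  BesselK nu y <= expR (- y / 2) * expR (4 * (nu + 1) ^+ 2 / y0).
Proof.
move=> y00 nu0 yy0.
set L := 4 * (nu + 1) ^+ 2 / y0.
set C := expR (- y / 2) * expR L.
have C0 : 0 <= C by rewrite mulr_ge0 ?expR_ge0.
have pt : forall t, 0 <= t ->
    expR (- y * coshR t) * coshR (nu * t) <= C * exponential_pdf 1 t.
  move=> t t0.
  rewrite /exponential_pdf patchE mem_set /=; last by rewrite in_itv /= t0.
  rewrite mul1r mulN1r.
  have c1 := coshR_ge1 t; have c2 := coshR_ge_sq t t0.
  have c3 := coshR_le_exp (nu * t) (mulr_ge0 (ltW nu0) t0).
  apply: (le_trans (ler_wpM2l (expR_ge0 _) c3)).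
  rewrite /C -!expRD ler_expR.
  have hL : (nu + 1) * t <= y0 * t ^+ 2 / 16 + L.
    rewrite /L.
    have : 0 <= (y0 * t / 4 - 2 * (nu + 1)) ^+ 2 by exact: sqr_ge0.
    move=> hsq.
    have e : y0 * t ^+ 2 / 16 + 4 * (nu + 1) ^+ 2 / y0 - (nu + 1) * t
             = (y0 * t / 4 - 2 * (nu + 1)) ^+ 2 / y0.
      by field; rewrite gt_eqF.
    have : 0 <= (y0 * t / 4 - 2 * (nu + 1)) ^+ 2 / y0 by rewrite divr_ge0 // ltW.
    lra.
  have : y0 * t ^+ 2 / 16 <= y / 2 * coshR t.
    have : y0 * (t ^+ 2 / 8) <= y * coshR t.
      apply: ler_pM => //; [exact: ltW|]; apply: divr_ge0 => //; exact: sqr_ge0.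
    lra.
  have : y / 2 <= y / 2 * coshR t.
    rewrite -{1}(mulr1 (y / 2)); apply: ler_wpM2l => //; lra.
  lra.
have mp : measurable_fun setT (@exponential_pdf R 1).
  exact: measurable_exponential_pdf.
have I0 : (0 <= \int[lebesgue_measure]_(t in `[0%R, +oo[)
     (expR (- y * coshR t) * coshR (nu * t))%:E)%E.
  apply: integral_ge0 => t _; rewrite lee_fin; apply: mulr_ge0; first exact: expR_ge0.
  rewrite /coshR; apply: divr_ge0 => //; apply: addr_ge0; exact: expR_ge0.
have I1 : (\int[lebesgue_measure]_(t in `[0%R, +oo[)
     (expR (- y * coshR t) * coshR (nu * t))%:E <= C%:E)%E.
  apply: (@le_trans _ _ (\int[lebesgue_measure]_(t in `[0%R, +oo[)
     (C%:E * (exponential_pdf 1 t)%:E))%E).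
    apply: ge0_le_integral => //.
    - move=> t; rewrite /= in_itv /= => /andP[t0 _]; rewrite lee_fin.
      apply: mulr_ge0; first exact: expR_ge0.
      rewrite /coshR; apply: divr_ge0 => //; apply: addr_ge0; exact: expR_ge0.
    - apply/measurable_EFinP; exact: measurable_funTS (measurable_BK nu y).
    - apply/measurable_EFinP; apply: measurable_funM => //.
      exact: measurable_funTS.
    - move=> t; rewrite /= in_itv /= => /andP[t0 _]; rewrite -EFinM lee_fin.
      exact: pt.
  rewrite ge0_integralZl //.
  - rewrite -[X in (_ <= X)%E]mule1.
    apply: lee_wpmul2l; first by rewrite lee_fin.
    rewrite -(integral_exponential_pdf (R := R) ltr01).
    apply: ge0_subset_integral => //.
    + exact/measurable_EFinP.
    + by move=> t _; rewrite lee_fin exponential_pdf_ge0.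
  - exact/measurable_EFinP/measurable_funTS.
  - by move=> t _; rewrite lee_fin exponential_pdf_ge0.
rewrite /BesselK /Rintegral.
move: I0 I1; case: (\int[_]_(_ in _) _)%E => //= r; rewrite !lee_fin //.
Qed.


Lemma powR_le_exp (y a : R) : 0 < y -> 0 < a ->
  y `^ a <= expR (y / 4) * expR (a * ln (4 * a)).
Proof.
move=> y0 a0.
rewrite /powR gt_eqF // -expRD ler_expR.
have a4 : 0 < 4 * a by rewrite mulr_gt0.
have e : y = (y / (4 * a)) * (4 * a) by field; rewrite gt_eqF.
have hl : ln y = ln (y / (4 * a)) + ln (4 * a).
  by rewrite {1}e lnM // posrE divr_gt0.
have h := ln_sublinear (divr_gt0 y0 a4).
have h2 : a * ln (y / (4 * a)) <= a * (y / (4 * a)).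
  by rewrite ler_pM2l //; exact: ltW.
have e2 : a * (y / (4 * a)) = y / 4 by field; rewrite gt_eqF.
rewrite hl.
lra.
Qed.

Lemma GammaR_ge0 (nu : R) : 0 <= GammaR nu.
Proof. apply: Rintegral_ge0 => t _; rewrite mulr_ge0 ?powR_ge0 ?expR_ge0 //. Qed.

Lemma matern_ge0 (sigma2 phi nu d : R) : 0 < sigma2 -> 0 <= matern sigma2 phi nu d.
Proof.
move=> s0; rewrite /matern; case: ifP => _; first exact: ltW.
apply: mulr_ge0; last exact: BesselK_ge0.
apply: mulr_ge0; last by rewrite invr_ge0 GammaR_ge0.
by rewrite !mulr_ge0 ?powR_ge0 // ltW.
Qed.

Lemma matern_decay (sigma2 phi nu h : R) : 0 < sigma2 -> 0 < phi -> 0 < nu -> 0 < h ->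
  exists A : R, forall d, h <= d -> matern sigma2 phi nu d * d ^+ 4 <= A.
Proof.
move=> s0 p0 nu0 h0.
set a := Num.sqrt 2 * phi.
have a0 : 0 < a by rewrite mulr_gt0 // sqrtr_gt0.
set y0 := a * h.
have y00 : 0 < y0 by rewrite mulr_gt0.
set k0 := 2 `^ (1 - nu) * sigma2 / GammaR nu.
have k00 : 0 <= k0.
  by rewrite mulr_ge0 ?invr_ge0 ?GammaR_ge0 // mulr_ge0 ?powR_ge0 // ltW.
set L := 4 * (nu + 1) ^+ 2 / y0.
exists (k0 * (expR (nu * ln (4 * nu)) * expR (4 * ln (4 * 4))) * expR L / a ^+ 4).
move=> d hd.
have d0 : 0 < d by apply: lt_le_trans hd.
rewrite /matern gt_eqF //.
rewrite -/a.
set y := a * d.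
have yp : 0 < y by rewrite mulr_gt0.
have yy0 : y0 <= y by rewrite ler_pM2l.
have eK := @BesselK_le y0 nu y y00 nu0 yy0.
have K0 := BesselK_ge0 nu y.
have p1 := powR_le_exp y nu yp nu0.
have p2 := powR_le_exp y 4 yp (ltr0Sn R 3).
rewrite powR_mulrn in p2; last exact: ltW.
have ed : d ^+ 4 = y ^+ 4 / a ^+ 4 by rewrite /y exprMn; field; rewrite ?expf_neq0 // gt_eqF.
rewrite ed.
have -> : 2 `^ (1 - nu) * sigma2 * y `^ nu / GammaR nu * BesselK nu y * (y ^+ 4 / a ^+ 4)
   = k0 * (y `^ nu * y ^+ 4 * BesselK nu y) / a ^+ 4.
  by rewrite /k0; ring.
apply: ler_pM; last exact: lexx.
- apply: mulr_ge0 => //; apply: mulr_ge0; [apply: mulr_ge0; [exact: powR_ge0 | apply: exprn_ge0; exact: ltW] | exact: BesselK_ge0].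
- by rewrite invr_ge0 exprn_ge0 // ltW.
rewrite -[X in _ <= X]mulrA; apply: ler_wpM2l => //.
set E1 := expR (nu * ln (4 * nu)); set E2 := expR (4 * ln (4 * 4)).
have step : y `^ nu * y ^+ 4 <= (expR (y / 4) * E1) * (expR (y / 4) * E2).
  apply: ler_pM => //; [exact: powR_ge0 | by rewrite exprn_ge0 // ltW].
apply: le_trans (ler_wpM2r K0 step) _.
apply: le_trans (ler_wpM2l _ eK) _.
  by rewrite mulr_ge0 // mulr_ge0 ?expR_ge0.
have -> : expR (y / 4) * E1 * (expR (y / 4) * E2) * (expR (- y / 2) * expR L)
   = E1 * E2 * expR L * (expR (y / 4) * expR (y / 4) * expR (- y / 2)) by ring.
rewrite -!expRD.
have -> : y / 4 + y / 4 + - y / 2 = 0 by field.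
by rewrite addr0.
Qed.

End Ana.
Local Close Scope classical_set_scope.
Section Comb.
Variable R : realType.

Lemma dist2_sq (s t : R * R) : dist2 s t ^+ 2 = (s.1 - t.1) ^+ 2 + (s.2 - t.2) ^+ 2.
Proof. by rewrite /dist2 sqr_sqrtr // addr_ge0 // sqr_ge0. Qed.

Lemma dist2_ge0 (s t : R * R) : 0 <= dist2 s t.
Proof. exact: sqrtr_ge0. Qed.

Lemma floor_abs (x : R) : `|(Num.floor x)%:~R| <= `|x| + 1 :> R.
Proof.
have h1 := floor_le x; have h2 := floorD1_gt x.
rewrite intrD in h2.
have := ler_norm x; have := ler_norm (- x); rewrite normrN.
rewrite ler_norml; lra.
Qed.

Lemma floor_close (x y : R) : Num.floor x = Num.floor y -> (x - y) ^+ 2 < 1.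
Proof.
move=> e.
have h1 := floor_le x; have h2 := floorD1_gt x.
have h3 := floor_le y; have h4 := floorD1_gt y.
rewrite intrD in h2 h4; rewrite e in h1 h2.
have u1 : 0 < 1 - (x - y) by lra.
have u2 : 0 < 1 + (x - y) by lra.
have := mulr_gt0 u1 u2.
have -> : (1 - (x - y)) * (1 + (x - y)) = 1 - (x - y) ^+ 2 by ring.
lra.
Qed.

Lemma aux_sq (m : R) : 1 <= m -> 1 / (m + 1) ^+ 2 <= 1 / m - 1 / (m + 1).
Proof.
move=> m1.
have e : 1 / m - 1 / (m + 1) - 1 / (m + 1) ^+ 2 = 1 / (m * (m + 1) ^+ 2).
  field; apply/andP; split; apply/lt0r_neq0; lra.
have : 0 <= 1 / (m * (m + 1) ^+ 2).
  apply: divr_ge0 => //; apply: mulr_ge0; [lra | exact: sqr_ge0].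
lra.
Qed.

Lemma sum_inv_sq N : \sum_(k < N.+1) 1 / (k%:R + 1) ^+ 2 <= 2 - 1 / (N%:R + 1) :> R.
Proof.
elim: N => [|N IH]; first by rewrite big_ord1 /= ?mul0rn ?add0r ?expr1n ?divr1; lra.
rewrite big_ord_recr /=.
have hN : 0 <= N%:R :> R by [].
have := @aux_sq (N%:R + 1) ltac:(lra).
rewrite -[(N.+1)%:R]natr1.
lra.
Qed.

Lemma sum_inv_sq2 N : \sum_(k < N) 1 / (k%:R + 1) ^+ 2 <= 2 :> R.
Proof.
case: N => [|N]; first by rewrite big_ord0.
apply: le_trans (sum_inv_sq N) _.
have : 0 <= 1 / (N%:R + 1) :> R by rewrite divr_ge0 // addr_ge0.
lra.
Qed.


Definition gsq (k : nat) : R := 1 / (k%:R + 1) ^+ 2.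

Lemma gsq_ge0 k : 0 <= gsq k.
Proof. by rewrite /gsq divr_ge0 // sqr_ge0. Qed.

Lemma abs_le_d (X Y d : R) : 0 <= d -> d ^+ 2 = X ^+ 2 + Y ^+ 2 -> `|X| <= d.
Proof.
move=> d0 e.
have n0 := normr_ge0 X.
have : `|X| ^+ 2 <= d ^+ 2 by rewrite real_normK ?num_real // e; have := sqr_ge0 Y; lra.
move=> hs; rewrite leNgt; apply/negP => hlt.
have : d ^+ 2 < `|X| ^+ 2 by rewrite ltr_pXn2r // ?ltW.
lra.
Qed.

Lemma pt_bound (h A d X Y F : R) :
  0 < h -> h <= d -> d ^+ 2 = X ^+ 2 + Y ^+ 2 -> 0 <= F -> F * d ^+ 4 <= A ->
  F <= (16 * A / (h / 2) ^+ 4) *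
       (gsq `|Num.floor (X / (h / 2))|%N * gsq `|Num.floor (Y / (h / 2))|%N).
Proof.
move=> h0 hd e F0 FA.
set c := h / 2.
have c0 : 0 < c by rewrite /c; lra.
have d0 : 0 < d by lra.
have ci : 0 <= c^-1 by rewrite invr_ge0 ltW.
rewrite /gsq !natr_absz !intr_norm.
set ra := `|_| in FA *; set rb := `|(Num.floor (Y / c))%:~R|.
have ha : ra <= d / c + 1.
  apply: le_trans (floor_abs _) _.
  apply: lerD; last exact: lexx.
  rewrite normrM (ger0_norm ci) ler_pM2r ?invr_gt0 //.
  exact: (@abs_le_d X Y d (ltW d0) e).
have hb : rb <= d / c + 1.
  apply: le_trans (floor_abs _) _.
  apply: lerD; last exact: lexx.
  rewrite normrM (ger0_norm ci) ler_pM2r ?invr_gt0 //.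
  apply: (@abs_le_d Y X d (ltW d0)); rewrite e; ring.
have t2 : 2 <= d / c by rewrite ler_pdivlMr // /c; lra.
set t := d / c in ha hb t2.
have ra0 : 0 <= ra by exact: normr_ge0.
have rb0 : 0 <= rb by exact: normr_ge0.
have pa : ra + 1 <= 2 * t by lra.
have pb : rb + 1 <= 2 * t by lra.
have P : (ra + 1) ^+ 2 * (rb + 1) ^+ 2 <= 16 * t ^+ 4.
  have : (ra + 1) * (rb + 1) <= (2 * t) * (2 * t) by apply: ler_pM; lra.
  move=> hh.
  have : ((ra + 1) * (rb + 1)) ^+ 2 <= ((2 * t) * (2 * t)) ^+ 2.
    rewrite [X in X <= _]expr2 [X in _ <= X]expr2; apply: ler_pM => //; nra.
  have -> : ((2 * t) * (2 * t)) ^+ 2 = 16 * t ^+ 4 by ring.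
  by rewrite exprMn.
have Ft : F * (16 * t ^+ 4) <= 16 * A / c ^+ 4.
  have -> : F * (16 * t ^+ 4) = 16 * (F * d ^+ 4) / c ^+ 4.
    by rewrite /t; field; rewrite gt_eqF.
  rewrite ler_pM2r ?invr_gt0 ?exprn_gt0 //; lra.
have hpos : 0 < (ra + 1) ^+ 2 * (rb + 1) ^+ 2 by rewrite mulr_gt0 // exprn_gt0 // ltr_wpDl.
have -> : 16 * A / c ^+ 4 * (1 / (ra + 1) ^+ 2 * (1 / (rb + 1) ^+ 2))
   = 16 * A / c ^+ 4 / ((ra + 1) ^+ 2 * (rb + 1) ^+ 2).
  by field; rewrite !gt_eqF //; lra.
rewrite ler_pdivlMr //.
apply: le_trans Ft; exact: ler_wpM2l.
Qed.

Lemma int_sign_abs (a b : int) : (a < 0) = (b < 0) -> `|a|%N = `|b|%N -> a = b.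
Proof. case: a => [m|m]; case: b => [k|k] //= _; [by move->|by move=> [->]]. Qed.

Lemma sum_pair_gsq M :
  \sum_(x : (bool * 'I_M.+1) * (bool * 'I_M.+1)) gsq x.1.2 * gsq x.2.2 <= 16.
Proof.
have S1 : \sum_(a : bool * 'I_M.+1) gsq a.2 <= 4.
  rewrite -(pair_bigA _ (fun (b : bool) (k : 'I_M.+1) => gsq k)) /= big_bool /=.
  have := sum_inv_sq2 M.+1; rewrite /gsq; lra.
have S0 : 0 <= \sum_(a : bool * 'I_M.+1) gsq a.2 by apply: sumr_ge0 => a _; exact: gsq_ge0.
rewrite -(pair_bigA _ (fun (a b : bool * 'I_M.+1) => gsq a.2 * gsq b.2)) /=.

under eq_bigr => a _ do rewrite -mulr_sumr.
rewrite -mulr_suml.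
have -> : (16 : R) = 4 * 4 by rewrite -natrM.
by apply: ler_pM.
Qed.

Lemma packing (h A : R) n (s : 'I_n -> R * R) (i : 'I_n) (F : 'I_n -> R) :
  0 < h -> 0 <= A -> (forall j k, j != k -> h <= dist2 (s j) (s k)) ->
  (forall j, j != i -> 0 <= F j /\ F j * dist2 (s j) (s i) ^+ 4 <= A) ->
  \sum_(j | j != i) F j <= (16 * A / (h / 2) ^+ 4) * 16.
Proof.
move=> h0 A0 sep HF.
set c := h / 2.
have c0 : 0 < c by rewrite /c; lra.
set K := 16 * A / c ^+ 4.
pose fa j := Num.floor (((s j).1 - (s i).1) / c).
pose fb j := Num.floor (((s j).2 - (s i).2) / c).
pose M := \max_(j : 'I_n) (`|fa j| + `|fb j|)%N.
have Ma j : (`|fa j| < M.+1)%N.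
  rewrite ltnS; apply: leq_trans (leq_bigmax j); exact: leq_addr.
have Mb j : (`|fb j| < M.+1)%N.
  rewrite ltnS; apply: leq_trans (leq_bigmax j); exact: leq_addl.
pose q j : (bool * 'I_M.+1) * (bool * 'I_M.+1) :=
  ((fa j < 0, inord `|fa j|), (fb j < 0, inord `|fb j|)).
pose G (x : (bool * 'I_M.+1) * (bool * 'I_M.+1)) := gsq x.1.2 * gsq x.2.2.
have K0 : 0 <= K by rewrite /K divr_ge0 ?exprn_ge0 ?(ltW c0) // mulr_ge0.
have step1 : \sum_(j | j != i) F j <= \sum_(j | j != i) K * G (q j).
  apply: ler_sum => j ji.
  have [F0 FA] := HF j ji.
  rewrite /G /q /= !inordK //.
  apply: (@pt_bound h A (dist2 (s j) (s i)) ((s j).1 - (s i).1) ((s j).2 - (s i).2)) => //.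
  - exact: sep.
  - exact: dist2_sq.
apply: le_trans step1 _.
rewrite -mulr_sumr ler_wpM2l //.
have inj : {in [set j | j != i] &, injective q}.
  move=> j k _ _ /= [e1 e2 e3 e4].
  have ea : fa j = fa k.
    apply: int_sign_abs => //.
    by have := congr1 val e2; rewrite /= !inordK.
  have eb : fb j = fb k.
    apply: int_sign_abs => //.
    by have := congr1 val e4; rewrite /= !inordK.
  have := @floor_close (((s j).1 - (s i).1) / c) (((s k).1 - (s i).1) / c) ea.
  have := @floor_close (((s j).2 - (s i).2) / c) (((s k).2 - (s i).2) / c) eb.
  case: (eqVneq j k) => // jk.
  have hd := sep j k jk.
  have hd2 : h ^+ 2 <= dist2 (s j) (s k) ^+ 2.
    by rewrite ler_pXn2r // ?nnegrE ?dist2_ge0 // ltW.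
  rewrite dist2_sq in hd2.
  have -> : ((s j).1 - (s i).1) / c - ((s k).1 - (s i).1) / c = ((s j).1 - (s k).1) / c.
    by field; rewrite gt_eqF.
  have -> : ((s j).2 - (s i).2) / c - ((s k).2 - (s i).2) / c = ((s j).2 - (s k).2) / c.
    by field; rewrite gt_eqF.
  have hp : 0 < h ^+ 2 by rewrite exprn_gt0.
  have ef : (2 : R) ^+ 2 = 4 by rewrite expr2 -natrM.
  have c2 : 0 < ((h / 2) ^+ 2) by rewrite exprn_gt0 // divr_gt0.
  rewrite !expr_div_n !ltr_pdivrMr -?expr_div_n // ?mul1r expr_div_n ef.
  move=> hb ha; exfalso.
  have : h ^+ 2 / 4 < h ^+ 2 by rewrite ltr_pdivrMr //; lra.
  lra.
have -> : \sum_(j | j != i) G (q j) = \sum_(j in [set j | j != i]) G (q j).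
  by apply: eq_bigl => j; rewrite inE.
rewrite -(big_imset _ inj).
apply: le_trans (sum_pair_gsq M).
rewrite [X in _ <= X](bigID (mem (q @: [set j | j != i]))) /= lerDl.
by apply: sumr_ge0 => x _; rewrite /G mulr_ge0 // gsq_ge0.

Qed.

End Comb.

Theorem lemmaS4 (R : realType) (sigma2 phi nu h tau2 : R) :
  0 < sigma2 -> 0 < phi -> 0 < nu -> 0 < h -> 0 <= tau2 ->
  exists Psi : R,
    forall (n : nat) (s : 'I_n -> R * R),
      (forall i j : 'I_n, i != j -> h <= dist2 (s i) (s j)) ->
      forall lambda : R,
        eigenvalue (Sigma_mat sigma2 phi nu tau2 s) lambda -> lambda <= Psi.
Proof.
move=> s0 p0 nu0 h0 t0.
have [A HA] := @matern_decay R sigma2 phi nu h s0 p0 nu0 h0.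
have A0 : 0 <= A.
  apply: le_trans (HA h (lexx h)).
  by rewrite mulr_ge0 ?(@matern_ge0 R) // exprn_ge0 // ltW.
exists (sigma2 + (16 * A / (h / 2) ^+ 4) * 16 + tau2).
move=> n s sep lam /eigenvalueP [v ev vn0].
have [i0 vi0] : exists i0, v 0 i0 != 0.
  apply/existsP; apply: contraNT vn0 => /existsPn H.
  by apply/eqP/rowP => j; rewrite mxE; apply/eqP; rewrite -[_ == _]negbK; exact: H j.
case: (@arg_maxP _ _ _ i0 xpredT (fun j => `|v 0 j|) isT) => i _ imax.
have vi : 0 < `|v 0 i|.
  by apply: lt_le_trans (imax i0 isT); rewrite normr_gt0.
set S := Sigma_mat sigma2 phi nu tau2 s.
have Sji j : S j i = matern sigma2 phi nu (dist2 (s j) (s i)) + tau2 *+ (j == i).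
  by rewrite /S /Sigma_mat /matern_cov !mxE.
have S0 j : 0 <= S j i.
  by rewrite Sji addr_ge0 ?(@matern_ge0 R) // mulrn_wge0.
have e : (v *m S) 0 i = (lam *: v) 0 i by rewrite /S ev.
move: e; rewrite mxE [in X in _ = X -> _]mxE => e.
have hsum : `|lam| * `|v 0 i| <= `|v 0 i| * \sum_j S j i.
  rewrite -normrM -e mulr_sumr.
  apply: le_trans (ler_norm_sum _ _ _) _.
  apply: ler_sum => j _.
  rewrite normrM (ger0_norm (S0 j)) ler_wpM2r //.
  exact: imax.
have hS : \sum_j S j i <= sigma2 + (16 * A / (h / 2) ^+ 4) * 16 + tau2.
  rewrite (bigD1 i) //= Sji eqxx mulr1n.
  have -> : dist2 (s i) (s i) = 0 by rewrite /dist2 !subrr expr0n /= addr0 sqrtr0.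
  rewrite /matern eqxx.
  have -> : \sum_(j | j != i) S j i = \sum_(j | j != i) matern sigma2 phi nu (dist2 (s j) (s i)).
    by apply: eq_bigr => j ji; rewrite Sji (negbTE ji) mulr0n addr0.
  have := @packing R h A n s i (fun j => matern sigma2 phi nu (dist2 (s j) (s i))) h0 A0 sep.
  have : 0 <= 0 by [].
  move=> _ P.
  have := P (fun j ji => conj (@matern_ge0 R sigma2 phi nu _ s0) (HA _ (sep j i ji))).
  lra.
have : `|lam| <= sigma2 + (16 * A / (h / 2) ^+ 4) * 16 + tau2.
  rewrite -(ler_pM2r vi) mulrC [X in _ <= X]mulrC.
  rewrite [X in X <= _]mulrC; apply: le_trans hsum _; apply: ler_wpM2l; [exact: ltW | exact: hS].
move=> h1; apply: le_trans h1; exact: ler_norm.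
Qed.
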